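(* Let $\mathcal{Y}\in\mathbb{Z}^{n_1\times\cdots\times n_d}$ be a sample from $\operatorname{TBM}(\rho,\mathcal{S},z_1,\dots,z_d)$ whose entries are sub-Poisson with dispersion parameter $\rho$. Let $1\le d'<d$ and define the aggregate tensor $\mathcal{Y}'\in\mathbb{Z}^{n_1\times\cdots\times n_{d'}}$ by $\mathcal{Y}'_{i_1\dots i_{d'}} = \sum_{i_{d'+1},\dots,i_d}\mathcal{Y}_{i_1\dots i_d}$. Then $\mathcal{Y}'$ is a sample from $\operatorname{TBM}(\rho',\mathcal{S}',z_1,\dots,z_{d'})$ with density $\rho' = n_{d'+1}\cdots n_d\,\rho$ and core tensor $$\mathcal{S}'_{j_1\dots j_{d'}} = \frac{1}{n_{d'+1}\cdots n_d}\sum_{i_{d'+1},\dots,i_d}\mathcal{S}_{j_1\dots j_{d'} z_{d'+1}(i_{d'+1})\dots z_d(i_d)},$$ and the entries of $\mathcal{Y}'$ are sub-Poisson with dispersion parameter $\rho'$.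
   Context: Tensor block model: $\operatorname{TBM}(\rho,\mathcal{S},z_1,\dots,z_d)$ with dimensions $n_1,\dots,n_d$ and cluster counts $r_1,\dots,r_d$ is the law of a random tensor $\mathcal{Y}\in\mathbb{Z}^{n_1\times\cdots\times n_d}$ with independent entries and $\mathbb{E}\mathcal{Y}_{i_1\dots i_d} = \rho\,\mathcal{S}_{z_1(i_1)\dots z_d(i_d)}$, where $\rho\ge 0$, $\mathcal{S}\in[-1,1]^{r_1\times\cdots\times r_d}$, and $z_j\in[r_j]^{n_j}$ (here $[r]=\{1,\dots,r\}$). Sub-Poisson: a real integrable random variable $X$ is sub-Poisson with dispersion parameter $\rho$ if $\mathbb{E}e^{\lambda(X-\mathbb{E}X)} \le \exp\{\rho(e^{|\lambda|}-1-|\lambda|)\}$ for all $\lambda\in\mathbb{R}$ and $\mathbb{E}|X-\mathbb{E}X|\le\rho$. *)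

(* Defs.v *)
From HB Require Import structures.
From mathcomp Require Import all_boot all_order all_algebra.
From mathcomp Require Import all_classical all_reals all_analysis.
Set Implicit Arguments. Unset Strict Implicit. Unset Printing Implicit Defensive.
Import Order.TTheory GRing.Theory Num.Theory.
Local Open Scope classical_set_scope.
Local Open Scope ring_scope.

(* Modes are 0-based: mode k : 'I_d; the index set of mode k is 'I_(n k). *)
Definition Idx (d : nat) (n : 'I_d -> nat) := {dffun forall k : 'I_d, 'I_(n k)}.

(* Cluster labels of an index i, as natural numbers (label z_k(i_k) - 1). *)
Definition labels (d : nat) (n r : 'I_d -> nat)
  (z : forall k : 'I_d, 'I_(n k) -> 'I_(r k)) (i : Idx n) : 'I_d -> nat :=
  fun k => val (z k (i k)).

Definition mutually_independent (R : realType) (dm : measure_display)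
  (T : measurableType dm) (P : probability T R) (I : finType)
  (Y : I -> T -> R) : Prop :=
  forall (J : {set I}) (B : I -> set R), (forall j, measurable (B j)) ->
    P (\big[setI/setT]_(j in J) (Y j @^-1` B j)) =
    (\prod_(j in J) P (Y j @^-1` B j))%E.

Definition subPoisson (R : realType) (dm : measure_display)
  (T : measurableType dm) (P : probability T R) (X : T -> R) (rho : R) : Prop :=
  let m := fine 'E_P[X] in
  [/\ measurable_fun setT X,
      P.-integrable setT (EFin \o X),
      (forall lam : R,
         ('E_P[fun w => (expR (lam * (X w - m)))%R]
            <= (expR (rho * (expR `|lam| - 1 - `|lam|)))%:E)%E)
    & ('E_P[fun w => (`|X w - m|)%R] <= rho%:E)%E].

(* The core tensor is a function
   of label vectors ('I_d -> nat); only its values on valid labels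
   (j k < r k for all k) matter and are constrained. *)
Definition TBM (R : realType) (dm : measure_display) (T : measurableType dm)
  (P : probability T R) (d : nat) (n r : 'I_d -> nat) (rho : R)
  (S : ('I_d -> nat) -> R) (z : forall k : 'I_d, 'I_(n k) -> 'I_(r k))
  (Y : Idx n -> T -> R) : Prop :=
  [/\ 0 <= rho /\
        (forall j : 'I_d -> nat, (forall k, (j k < r k)%N) -> -1 <= S j <= 1),
      (forall i, measurable_fun setT (Y i)),
      (forall i w, Y i w \in Num.int),
      mutually_independent P Y
    & forall i, P.-integrable setT (EFin \o Y i) /\
                ('E_P[Y i] = (rho * S (labels z i))%:E)%E].

Definition nprefix (d' d : nat) (H : (d' <= d)%N) (n : 'I_d -> nat) :
  'I_d' -> nat := fun k => n (widen_ord H k).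

Definition prefix (d' d : nat) (H : (d' <= d)%N) (n : 'I_d -> nat)
  (i : Idx n) : Idx (nprefix H n) := finfun (fun k => i (widen_ord H k)).

Definition z_prefix (d' d : nat) (H : (d' <= d)%N) (n r : 'I_d -> nat)
  (z : forall k : 'I_d, 'I_(n k) -> 'I_(r k)) :
  forall k : 'I_d', 'I_(nprefix H n k) -> 'I_(nprefix H r k) :=
  fun k => z (widen_ord H k).

Definition aggregate (R : realType) (T : Type) (d' d : nat) (H : (d' <= d)%N)
  (n : 'I_d -> nat) (Y : Idx n -> T -> R) : Idx (nprefix H n) -> T -> R :=
  fun i' w => \sum_(i : Idx n | prefix H i == i') Y i w.

(* Indices of the last modes d'+1,...,d (0-based: k >= d'). *)
Definition TailIdx (d' d : nat) (n : 'I_d -> nat) :=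
  {dffun forall k : {k : 'I_d | (d' <= k)%N}, 'I_(n (val k))}.

Definition tail_size (d' d : nat) (n : 'I_d -> nat) : nat :=
  \prod_(k : 'I_d | (d' <= k)%N) n k.

(* Label vector (j_1,...,j_d', z_{d'+1}(i_{d'+1}),...,z_d(i_d)). *)
Definition comb_labels (d' d : nat) (n r : 'I_d -> nat)
  (z : forall k : 'I_d, 'I_(n k) -> 'I_(r k)) (j' : 'I_d' -> nat)
  (t : TailIdx d' n) : 'I_d -> nat :=
  fun k => match (insub (val k) : option 'I_d') with
           | Some kk => j' kk
           | None => match (insub k : option {k0 : 'I_d | (d' <= k0)%N}) with
                     | Some kk => val (z (val kk) (t kk))
                     | None => 0%N
                     end
           end.

Definition core_agg (R : realType) (d' d : nat) (n r : 'I_d -> nat)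
  (z : forall k : 'I_d, 'I_(n k) -> 'I_(r k)) (S : ('I_d -> nat) -> R)
  (j' : 'I_d' -> nat) : R :=
  (tail_size d' n)%:R^-1 * \sum_(t : TailIdx d' n) S (comb_labels z j' t).

(* Main.v *)
Require Import Defs.
From HB Require Import structures.
From mathcomp Require Import all_boot all_order all_algebra.
From mathcomp Require Import all_classical all_reals all_analysis.
Import Order.TTheory GRing.Theory Num.Theory.

Module SA.
Set Implicit Arguments. Unset Strict Implicit. Unset Printing Implicit Defensive.
Local Open Scope classical_set_scope.
Local Open Scope ring_scope.

Section series.
Context (R : realType).
Local Open Scope ereal_scope.
Lemma nneseriesZl_e (c : \bar R) (f : nat -> \bar R) : 0 <= c -> (forall n, 0 <= f n) ->
  \sum_(n <oo) (c * f n) = c * \sum_(n <oo) f n.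
Proof.
case: c => [r| |] // c0 f0.
- exact: nneseriesZl.
- have [all0|] := pselect (forall n, f n = 0).
    rewrite eseries0; last by move=> i _ _; rewrite all0 mule0.
    by rewrite eseries0 ?mule0// => i _ _; rewrite all0.
  move=> /existsNP[n0 fn0].
  have fpos : 0 < f n0 by rewrite lt0e; apply/andP; split; [apply/eqP|].
  rewrite (@eseries_pinfty _ _ _ n0) //; last by rewrite gt0_mulye.
    rewrite gt0_mulye//; apply: (lt_le_trans fpos).
    have := @nneseries_lim_ge R f xpredT 0 n0.+1 (fun n _ _ => f0 n).
    apply: le_trans; rewrite big_nat_recr//= leeDr//.
    by rewrite sume_ge0.
  by move=> n _; apply/negP => /eqP h; have := mule_ge0 (c0) (f0 n); rewrite h.
Qed.
End series.

End SA.
Import SA.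

Module SB.
Set Implicit Arguments. Unset Strict Implicit. Unset Printing Implicit Defensive.
Local Open Scope classical_set_scope.
Local Open Scope ring_scope.

Section enum.
Context (R : realType).
Definition sv (n : nat) : set R :=
  if @pickle_inv int n is Some z then [set (z%:~R : R)] else set0.
Definition vv (n : nat) : R :=
  if @pickle_inv int n is Some z then z%:~R else 0.

Lemma sv_meas n : measurable (sv n).
Proof. by rewrite /sv; case: pickle_inv => //. Qed.

Lemma sv_val n r : sv n r -> r = vv n.
Proof. by rewrite /sv /vv; case: pickle_inv => // z ->. Qed.

Lemma sv_cover r : r \in Num.int -> exists n, sv n r.
Proof. by case/intrP => z ->; exists (pickle z); rewrite /sv pickleK_inv. Qed.

Lemma sv_uniq n m r : sv n r -> sv m r -> n = m.
Proof.
rewrite /sv; have := @pickle_invK int n; have := @pickle_invK int m.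
case: pickle_inv => [z|]//; case: pickle_inv => [z'|]//= <- <- -> /eqP.
by rewrite eqr_int => /eqP ->.
Qed.
End enum.

End SB.
Import SB.

Module SC.
Set Implicit Arguments. Unset Strict Implicit. Unset Printing Implicit Defensive.
Local Open Scope classical_set_scope.
Local Open Scope ring_scope.

Section indep.
Context (R : realType) (dm : measure_display) (T : measurableType dm)
  (P : probability T R) (I : finType) (Y : I -> T -> R).
Hypotheses (mY : forall i, measurable_fun setT (Y i))
  (iY : forall i w, Y i w \in Num.int) (indY : mutually_independent P Y).

Definition Ev (J : {set I}) (B : I -> set R) : set T :=
  \big[setI/setT]_(j in J) (Y j @^-1` B j).

Definition Sg (g : {set I}) (x : T) : R := \sum_(i in g) Y i x.

Lemma Ev_meas J B : (forall j, measurable (B j)) -> measurable (Ev J B).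
Proof.
move=> mB; rewrite /Ev; apply: big_ind => //; first exact: measurableI.
by move=> j _; rewrite -[X in measurable X]setTI; exact: mY.
Qed.

Lemma Ev_indep J B : (forall j, measurable (B j)) ->
  P (Ev J B) = (\prod_(j in J) P (Y j @^-1` B j))%E.
Proof. by move=> mB; apply: indY. Qed.

Lemma Sg_meas g : measurable_fun setT (Sg g).
Proof.
rewrite /Sg; under eq_fun do rewrite big_mkcond /=.
apply: measurable_sum => i; case: (i \in g) => //; exact: measurable_cst.
Qed.

Definition Bup (B : I -> set R) (a : I) (n : nat) : I -> set R :=
  fun j => if j == a then @sv R n else B j.

Lemma Bup_meas B a n : (forall j, measurable (B j)) -> forall j, measurable (Bup B a n j).
Proof. by move=> mB j; rewrite /Bup; case: ifP => _ //; exact: sv_meas. Qed.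

Lemma EvU1 (J : {set I}) (B : I -> set R) (a : I) (n : nat) : a \notin J ->
  Ev (a |: J) (Bup B a n) = Y a @^-1` @sv R n `&` Ev J B.
Proof.
move=> aJ; rewrite /Ev big_setU1 //= /Bup eqxx; congr (_ `&` _).
by apply: eq_bigr => j jJ; case: eqP => // ja; move: aJ; rewrite -ja jJ.
Qed.

Lemma Ev_bigcup (J : {set I}) (B : I -> set R) (a : I) : Ev J B = \bigcup_n (Y a @^-1` @sv R n `&` Ev J B).
Proof.
apply/seteqP; split => [x Ex|x [n _ [_ Ex]]//].
by have [n hn] := sv_cover (iY a x); exists n.
Qed.

Lemma P_EvU1 (J : {set I}) (B : I -> set R) (a : I) (n : nat) : a \notin J -> (forall j, measurable (B j)) ->
  P (Ev (a |: J) (Bup B a n)) = (P (Y a @^-1` @sv R n) * P (Ev J B))%E.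
Proof.
move=> aJ mB; rewrite Ev_indep; last exact: Bup_meas.
rewrite big_setU1 //= Ev_indep // /Bup eqxx; congr (_ * _)%E.
by apply: eq_bigr => j jJ; case: eqP => // ja; move: aJ; rewrite -ja jJ.
Qed.

End indep.

End SC.
Import SC.

Module SD.
Set Implicit Arguments. Unset Strict Implicit. Unset Printing Implicit Defensive.
Local Open Scope classical_set_scope.
Local Open Scope ring_scope.

Section indep2.
Context (R : realType) (dm : measure_display) (T : measurableType dm)
  (P : probability T R) (I : finType) (Y : I -> T -> R).
Hypotheses (mY : forall i, measurable_fun setT (Y i))
  (iY : forall i w, Y i w \in Num.int) (indY : mutually_independent P Y).
Local Open Scope ereal_scope.

Lemma meas_prod_in (K : finType) (J' : {set K}) (F : K -> T -> R) :
  (forall k, measurable_fun setT (F k)) ->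
  measurable_fun setT (fun x => \prod_(k in J') F k x)%R.
Proof.
move=> mF; under eq_fun do rewrite big_mkcond /=.
apply: measurable_prod => k _; case: (k \in J') => //; exact: measurable_cst.
Qed.

Lemma L_base (K : finType) (J' : {set K}) (g : K -> {set I}) (h : K -> R -> R)
    (J : {set I}) (B : I -> set R) :
  (forall k, k \in J' -> g k = finset.set0) -> (forall j, measurable (B j)) ->
  \int[P]_(x in Ev Y J B) (\prod_(k in J') h k (Sg Y (g k) x))%R%:E =
  (P (Ev Y J B) * \prod_(k in J') \int[P]_x (h k (Sg Y (g k) x))%:E)%E.
Proof.
move=> g0 mB.
transitivity (\int[P]_(x in Ev Y J B) (cst (\prod_(k in J') h k 0)%R%:E) x).
  apply: eq_integral => x _ /=; congr EFin; apply: eq_bigr => k kJ.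
  by rewrite /Sg g0 // big_set0.
rewrite integral_cst; last exact: Ev_meas.
rewrite (eq_bigr (fun k => (h k 0)%:E)); last first.
  move=> k kJ; transitivity (\int[P]_x (cst (h k 0)%:E) x).
    by apply: eq_integral => x _; rewrite /Sg g0 // big_set0.
  by rewrite integral_cst // -[RHS]mule1; congr (_ * _); exact: probability_setT.
rewrite muleC; congr (_ * _); rewrite -prodEFin //.
Qed.

Lemma L_dec (K : finType) (J' : {set K}) (g : K -> {set I}) (h : K -> R -> R)
    (J : {set I}) (B : I -> set R) (k0 : K) (a : I) :
  k0 \in J' -> a \in g k0 -> a \notin J -> (forall j, measurable (B j)) ->
  (forall k, measurable_fun setT (h k)) -> (forall k t, 0 <= h k t)%R ->
  \int[P]_(x in Ev Y J B) (\prod_(k in J') h k (Sg Y (g k) x))%R%:E =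
  \sum_(n <oo) \int[P]_(x in Ev Y (a |: J) (Bup B a n))
     (\prod_(k in J') (if k == k0 then (fun t => h k0 (vv R n + t)) else h k)
         (Sg Y (if k == k0 then g k0 :\ a else g k) x))%R%:E.
Proof.
move=> k0J ag aJ mB mh h0.
rewrite {1}(Ev_bigcup iY J B a) ge0_integral_bigcup.
- apply: eq_eseriesr => n _; rewrite EvU1 //.
  apply: eq_integral => x; rewrite inE => -[/= /sv_val ya _].
  congr EFin; apply: eq_bigr => k kJ.
  case: eqP => [->|_] //.
  by rewrite /Sg (big_setD1 a) //= ya.
- move=> n; apply: measurableI; last exact: Ev_meas.
  rewrite -[X in measurable X]setTI; apply: mY => //; exact: sv_meas.
- apply: measurable_funS (measurableT) (subsetT _) _.
  apply/measurable_realfun.measurable_EFinP; apply: meas_prod_in => k.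
  apply: measurableT_comp; first exact: mh.
  exact: Sg_meas.
- by move=> x _; rewrite lee_fin; apply: prodr_ge0 => k _.
- move=> i j _ _ [x [[/= hi _] [/= hj _]]]; exact: sv_uniq hi hj.
Qed.

End indep2.

End SD.
Import SD.

Module SE.
Set Implicit Arguments. Unset Strict Implicit. Unset Printing Implicit Defensive.
Local Open Scope ring_scope.

Section indep3.
Context (R : realType) (dm : measure_display) (T : measurableType dm)
  (P : probability T R) (I : finType) (Y : I -> T -> R).
Hypotheses (mY : forall i, measurable_fun setT (Y i))
  (iY : forall i w, Y i w \in Num.int) (indY : mutually_independent P Y).
Local Open Scope ereal_scope.

Lemma L_main (K : finType) (m : nat) : forall (J' : {set K}) (g : K -> {set I})
    (h : K -> R -> R) (J : {set I}) (B : I -> set R),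
  (\sum_(k in J') #|g k| <= m)%N ->
  {in J' &, forall k k', k != k' -> [disjoint g k & g k']} ->
  (forall k, k \in J' -> [disjoint J & g k]) ->
  (forall j, measurable (B j)) ->
  (forall k, measurable_fun setT (h k)) -> (forall k t, 0 <= h k t)%R ->
  \int[P]_(x in Ev Y J B) (\prod_(k in J') h k (Sg Y (g k) x))%R%:E =
  P (Ev Y J B) * \prod_(k in J') \int[P]_x (h k (Sg Y (g k) x))%:E.
Proof.
elim: m => [|m IH] J' g h J B hm gdis Jdis mB mh h0.
  apply: L_base => // k kJ; apply/eqP; rewrite -cards_eq0 -leqn0.
  by move: hm; rewrite (bigD1 k) //=; apply: leq_trans; apply: leq_addr.
case: (boolP [forall k in J', g k == finset.set0]) => [/forall_inP all0|].
  by apply: L_base => // k kJ; apply/eqP; apply: all0.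
move=> /forall_inPn [k0 k0J /set0Pn [a ag]].
have aJ : a \notin J by apply/negP => aJ; have := disjointFr (Jdis k0 k0J) aJ; rewrite ag.
have Ig : forall k, (0 <= \int[P]_x (h k (Sg Y (g k) x))%:E).
  by move=> k; apply: integral_ge0 => x _; rewrite lee_fin.
pose g' := fun k => if k == k0 then g k0 :\ a else g k.
pose h' := fun n k => if k == k0 then (fun t => h k0 (vv R n + t)%R) else h k.
have g'sub : forall k, g' k \subset g k.
  by move=> k; rewrite /g'; case: eqP => [->|_]; [exact: subsetDl | exact: subxx].
have hm' : (\sum_(k in J') #|g' k| <= m)%N.
  rewrite (bigD1 k0) //= /g' eqxx.
  move: hm; rewrite (bigD1 k0) //= (cardsD1 a (g k0)) ag add1n addSn ltnS.
  rewrite (eq_bigr (fun k => #|g k|) (F1 := fun k => #|if k == k0 then g k0 :\ a else g k|)) //.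
  by move=> k /andP[_ /negbTE ->].
have gdis' : {in J' &, forall k k', k != k' -> [disjoint g' k & g' k']}.
  move=> k k' kJ k'J kk'; apply: disjointWl (g'sub k) _.
  apply: disjointWr (g'sub k') _; exact: gdis.
have Jdis' : forall J0 : {set I}, (forall k, k \in J' -> [disjoint J0 & g k]) ->
    forall k, k \in J' -> [disjoint a |: J0 & g' k].
  move=> J0 J0dis k kJ; rewrite -setI_eq0; apply/eqP/setP => x.
  rewrite !inE; apply/negP => /andP[/orP[/eqP xa|xJ] xg].
    move: xg; rewrite xa /g'; case: eqP => [_|/eqP kk0]; first by rewrite setD11.
    by rewrite (disjointFr (gdis k0 k k0J kJ _) ag) // eq_sym.
  by have := disjointFr (J0dis k kJ) xJ; rewrite (fintype.subsetP (g'sub k) _ xg).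
have mh' : forall n k, measurable_fun setT (h' n k).
  move=> n k; rewrite /h'; case: eqP => _ //.
  apply: measurableT_comp; first exact: mh.
  by apply: measurable_realfun.measurable_funD => //; exact: measurable_cst.
have h0' : forall n k t, (0 <= h' n k t)%R by move=> n k t; rewrite /h'; case: eqP.
have Ik0 : \int[P]_x (h k0 (Sg Y (g k0) x))%:E =
    \sum_(n <oo) (P (Y a @^-1` sv n)%classic *
       \int[P]_x (h k0 (vv R n + Sg Y (g k0 :\ a) x)%R)%:E).
  have a0 : a \notin (finset.set0 : {set I}) by rewrite !inE.
  have szk0 : (#|g k0 :\ a| <= m)%N.
    move: hm; rewrite (bigD1 k0) //= (cardsD1 a (g k0)) ag add1n addSn ltnS.
    by apply: leq_trans; apply: leq_addr.
  transitivity (\int[P]_(x in Ev Y finset.set0 B) (\prod_(k in [set k0]) h k (Sg Y (g k) x))%R%:E).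
    by rewrite /Ev big_set0; apply: eq_integral => x _; rewrite big_set1.
  rewrite (L_dec P mY iY (set11 k0) ag a0 mB mh h0).
  apply: eq_eseriesr => n _.
  rewrite (IH [set k0] g' (h' n) (a |: finset.set0) (Bup B a n)); first last.
  - exact: h0'.
  - exact: mh'.
  - exact: Bup_meas.
  - move=> k /set1P ->; apply: Jdis' => // k1 _; by rewrite -setI_eq0 finset.set0I.
  - by move=> k k' /set1P -> /set1P ->; rewrite eqxx.
  - by rewrite big_set1 /g' eqxx.
  rewrite big_set1 /h' /g' eqxx P_EvU1 //.
  have -> : P (Ev Y finset.set0 B) = 1 by rewrite /Ev big_set0; exact: probability_setT.
  by rewrite mule1.
rewrite (L_dec P mY iY k0J ag aJ mB mh h0).
rewrite [X in _ = _ * X](bigD1 k0) //= Ik0.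
set C := (\prod_(k in J' | k != k0) _)%E.
transitivity (\sum_(n <oo) ((P (Ev Y J B) * C) * (P (Y a @^-1` sv n)%classic *
       \int[P]_x (h k0 (vv R n + Sg Y (g k0 :\ a) x)%R)%:E))).
  apply: eq_eseriesr => n _.
  rewrite (IH J' g' (h' n) (a |: J) (Bup B a n) hm' gdis' (Jdis' J Jdis) (Bup_meas a n mB) (mh' n) (h0' n)).
  rewrite P_EvU1 // (bigD1 k0) //= /h' /g' eqxx.
  rewrite (eq_bigr (fun k => \int[P]_x (h k (Sg Y (g k) x))%:E)); last first.
    by move=> k /andP[_ /negbTE ->].
  by rewrite muleACA muleC.
rewrite nneseriesZl_e.
- by rewrite -muleA; congr (_ * _); exact: muleC.
- by apply: mule_ge0 => //; apply: prode_ge0 => k _; exact: Ig.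
- move=> n; apply: mule_ge0 => //; apply: integral_ge0 => x _; rewrite lee_fin; exact: h0.
Qed.
End indep3.

End SE.
Import SE.

Module SF.
Set Implicit Arguments. Unset Strict Implicit. Unset Printing Implicit Defensive.
Local Open Scope ring_scope.

Section cors.
Context (R : realType) (dm : measure_display) (T : measurableType dm)
  (P : probability T R) (I : finType) (Y : I -> T -> R).
Hypotheses (mY : forall i, measurable_fun setT (Y i))
  (iY : forall i w, Y i w \in Num.int) (indY : mutually_independent P Y).
Local Open Scope ereal_scope.

Lemma PEv0 (B : I -> set R) : P (Ev Y finset.set0 B) = 1.
Proof. by rewrite /Ev big_set0; exact: probability_setT. Qed.

Lemma block_indep (K : finType) (g : K -> {set I}) :
  (forall k k', k != k' -> [disjoint g k & g k']) ->
  mutually_independent P (fun k x => Sg Y (g k) x).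
Proof.
move=> gdis J' B' mB'.
have := L_main mY iY indY (m := (\sum_(k in J') #|g k|)%N) (J' := J') (g := g)
  (h := fun k => \1_(B' k) : R -> R) (J := finset.set0) (B := fun=> setT) (leqnn _).
have a0 : forall k, k \in J' -> [disjoint (finset.set0 : {set I}) & g k].
  by move=> k _; rewrite -setI_eq0 finset.set0I.
move=> /(_ (fun k k' _ _ => gdis k k') a0 (fun=> measurableT)).
have mi : forall k, measurable_fun setT (\1_(B' k) : R -> R).
  by move=> k; apply: measurable_realfun.measurable_indic.
move=> /(_ mi (fun k t => ler0n _ _)); rewrite PEv0 mul1e.
have -> : \int[P]_(x in Ev Y finset.set0 (fun=> setT))
    (\prod_(k in J') (\1_(B' k) : R -> R) (Sg Y (g k) x))%R%:E =
    \int[P]_x (\1_(\big[setI/setT]_(j in J') ((fun k x => Sg Y (g k) x) j @^-1` B' j))%classic x)%:E.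
  rewrite /Ev big_set0; apply: eq_integral => x _; congr EFin.
  elim/big_rec2: _ => [|k y A _ ->]; first by rewrite indicT.
  by rewrite indicI /= !indicE.
rewrite integral_indic ?setIT; [|exact: measurableT|].
2:{ apply: big_ind; [exact: measurableT|exact: measurableI|].
  move=> j _; rewrite -[X in measurable X]setTI.
  exact: (Sg_meas mY (g j) measurableT (mB' j)). }
move=> ->; apply: eq_bigr => k _.
have mA : measurable ((fun x => Sg Y (g k) x) @^-1` B' k)%classic.
  rewrite -[X in measurable X]setTI.
  exact: (Sg_meas mY (g k) measurableT (mB' k)).
rewrite -(setIT ((fun x => Sg Y (g k) x) @^-1` B' k)%classic) -integral_indic //.
Qed.

Lemma prod_indep (G : {set I}) (f : I -> R -> R) :
  (forall i, measurable_fun setT (f i)) -> (forall i t, 0 <= f i t)%R ->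
  \int[P]_x (\prod_(i in G) f i (Y i x))%R%:E =
  \prod_(i in G) \int[P]_x (f i (Y i x))%:E.
Proof.
move=> mf f0.
have := L_main mY iY indY (m := (\sum_(k in G) #|[set k]|)%N) (J' := G) (g := fun k => [set k])
  (h := f) (J := finset.set0) (B := fun=> setT) (leqnn _).
have a0 : forall k, k \in G -> [disjoint (finset.set0 : {set I}) & [set k]].
  by move=> k _; rewrite -setI_eq0 finset.set0I.
have gd : {in G &, forall k k', k != k' -> [disjoint [set k] & [set k']]}.
  move=> k k' _ _ kk'. by rewrite disjoints1; apply/negP => /set1P kk; move: kk'; rewrite kk eqxx.
move=> /(_ gd a0 (fun=> measurableT) mf f0); rewrite PEv0 mul1e.
rewrite /Ev big_set0 /Sg.
under eq_integral do under eq_bigr do rewrite big_set1.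
move=> ->; apply: eq_bigr => i _.
by apply: eq_integral => x _; rewrite big_set1.
Qed.
End cors.

End SF.
Import SF.

Module SG.
Set Implicit Arguments. Unset Strict Implicit. Unset Printing Implicit Defensive.

Section comb.
Context (d' d : nat) (H : (d' <= d)%N) (n : 'I_d -> nat).

Definition tailf (i : Idx n) : TailIdx d' n :=
  [ffun kk : {k : 'I_d | (d' <= k)%N} => i (val kk)].

Lemma ge_of (k : 'I_d) : ~ (k < d')%N -> (d' <= k)%N.
Proof. by move=> h; rewrite leqNgt; apply/negP. Qed.

Definition ltdec (a b : nat) : {(a < b)%N} + {~~ (a < b)%N} :=
  match (a < b)%N as c return ({c} + {~~ c}) with
  | true => left (erefl true) | false => right (erefl true) end.

Definition jf (i' : Idx (nprefix H n)) (t : TailIdx d' n) (k : 'I_d) : 'I_(n k) :=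
  match ltdec k d' with
  | left hk => cast_ord (congr1 n (@val_inj _ _ _ (widen_ord H (Ordinal hk)) k erefl))
                     (i' (Ordinal hk))
  | right hk => t (exist _ k (ge_of (elimN idP hk)))
  end.

Definition joinf i' t : Idx n := [ffun k => jf i' t k].

Lemma jf_lt i' t (k : 'I_d) (hk : (k < d')%N) : val (jf i' t k) = val (i' (Ordinal hk)).
Proof.
rewrite /jf; case: ltdec => [hk'|hk']; last by exfalso; move/negP: hk'; apply.
by have -> : hk' = hk by apply: bool_irrelevance.
Qed.

Lemma jf_ge i' t (k : 'I_d) (hk : (d' <= k)%N) :
  val (jf i' t k) = val (t (exist _ k hk)).
Proof.
rewrite /jf; case: ltdec => [hk'|hk']; first by exfalso; move: (leq_trans hk' hk); rewrite ltnn.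
by have -> : ge_of (elimN idP hk') = hk by apply: bool_irrelevance.
Qed.

Lemma val_dep (i : Idx n) (w k : 'I_d) : w = k -> val (i w) = val (i k).
Proof. by move->. Qed.

Lemma prefix_join i' t : Defs.prefix H (joinf i' t) = i'.
Proof.
apply/ffunP => kk; apply: val_inj; rewrite /Defs.prefix (@ffunE _ (fun k => 'I_(nprefix H n k))).
rewrite /joinf (@ffunE _ (fun k => 'I_(n k))) (@jf_lt i' t (widen_ord H kk) (ltn_ord kk)).
by have -> : Ordinal (ltn_ord kk) = kk by apply: val_inj.
Qed.

Lemma tail_join i' t : tailf (joinf i' t) = t.
Proof.
apply/ffunP => kk; apply: val_inj; rewrite /tailf (@ffunE _ (fun kk => 'I_(n (val kk)))).
case: kk => k hk /=; rewrite /joinf (@ffunE _ (fun k => 'I_(n k))) (jf_ge _ _ hk) //.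
Qed.

Lemma join_tail i i' : Defs.prefix H i == i' -> joinf i' (tailf i) = i.
Proof.
move=> /eqP <-; apply/ffunP => k; apply: val_inj; rewrite /joinf (@ffunE _ (fun k => 'I_(n k))).
case: (ltnP k d') => hk.
  rewrite (jf_lt _ _ hk) /Defs.prefix (@ffunE _ (fun k => 'I_(nprefix H n k))).
  by apply: val_dep; apply: val_inj.
by rewrite (jf_ge _ _ hk) /tailf (@ffunE _ (fun kk => 'I_(n (val kk)))).
Qed.

Lemma card_tail : #|{: TailIdx d' n}| = tail_size d' n.
Proof.
rewrite card_dep_ffun /tail_size foldrE big_map big_enum /=.
rewrite (reindex_omap (val : {k : 'I_d | (d' <= k)%N} -> 'I_d) insub); last first.
  by move=> i hi; rewrite insubT.
apply: eq_big => [[k hk]|[k hk] _] /=; last by rewrite card_ord.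
by rewrite hk insubT /=; apply/esym/eqP; congr Some; apply: val_inj.
Qed.
Lemma sum_prefix (R : Type) (idx : R) (op : Monoid.com_law idx) (i' : Idx (nprefix H n))
  (F : Idx n -> R) :
  \big[op/idx]_(i | Defs.prefix H i == i') F i =
  \big[op/idx]_(t : TailIdx d' n) F (joinf i' t).
Proof.
rewrite (reindex_onto (joinf i') tailf); last by move=> i hi; apply: join_tail.
by apply: eq_bigl => t; rewrite prefix_join tail_join !eqxx.
Qed.

Lemma zval (r : 'I_d -> nat) (z : forall k, 'I_(n k) -> 'I_(r k))
  (w k : 'I_d) (x : 'I_(n k)) (y : 'I_(n w)) :
  w = k -> val x = val y -> val (z k x) = val (z w y).
Proof. by move=> e; subst w => /val_inj ->. Qed.

Lemma labels_join (r : 'I_d -> nat) (z : forall k, 'I_(n k) -> 'I_(r k)) i' t :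
  labels z (joinf i' t) = comb_labels z (labels (@z_prefix d' d H n r z) i') t.
Proof.
apply/funext => k; rewrite /labels /comb_labels /joinf (@ffunE _ (fun k => 'I_(n k))).
case: (ltnP k d') => hk.
  rewrite insubT /z_prefix; apply: zval; first by apply: val_inj.
  exact: jf_lt.
rewrite insubF; last by rewrite ltnNge hk.
rewrite insubT /=; apply: zval => //; exact: jf_ge.
Qed.
End comb.

End SG.
Import SG.

Unset Implicit Arguments.
Local Open Scope ring_scope.
Local Open Scope ring_scope.

Lemma avg_bound (R : realType) (X : finType) (f : X -> R) (N : nat) : #|X| = N ->
  (forall x, -1 <= f x <= 1) -> -1 <= N%:R^-1 * \sum_x f x <= 1.
Proof.
move=> hN hf.
have s1 : \sum_(x : X) (1:R) = N%:R by rewrite sumr_const hN.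
have hle : \sum_x f x <= N%:R.
  by rewrite -s1; apply: ler_sum => x _; case/andP: (hf x).
have hge : - N%:R <= \sum_x f x.
  by rewrite -s1 -sumrN; apply: ler_sum => x _; case/andP: (hf x).
have [->|N0] := eqVneq N 0%N; first by rewrite invr0 mul0r lerN10 ler01.
have up : 0 < N%:R :> R by rewrite ltr0n lt0n.
have ui : 0 <= N%:R^-1 :> R by rewrite invr_ge0 ltW.
have h1 : 0 <= \sum_x f x - - N%:R by rewrite subr_ge0.
have h2 : 0 <= N%:R - \sum_x f x by rewrite subr_ge0.
apply/andP; split.
  have := mulr_ge0 ui h1.
  by rewrite mulrBr mulrN mulVf ?pnatr_eq0 // subr_ge0.
have := mulr_ge0 ui h2.
by rewrite mulrBr mulVf ?pnatr_eq0 // subr_ge0.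
Qed.

Lemma comb_valid (d' d : nat) (H : (d' <= d)%N) (n r : 'I_d -> nat)
  (z : forall k : 'I_d, 'I_(n k) -> 'I_(r k)) (j' : 'I_d' -> nat) (t : TailIdx d' n) :
  (forall k, j' k < nprefix H r k)%N -> forall k, (comb_labels z j' t k < r k)%N.
Proof.
move=> hj k; rewrite /comb_labels; case: (ltnP k d') => hk.
  rewrite insubT; have := hj (Ordinal hk); rewrite /nprefix.
  by have -> : widen_ord H (Ordinal hk) = k by apply: val_inj.
rewrite insubF; last by rewrite ltnNge hk.
by rewrite insubT /=; exact: ltn_ord.
Qed.

Lemma lee_prod_ge0 (R : realType) (I : finType) (A : pred I) (a b : I -> \bar R) :
  (forall i, A i -> (0 <= a i)%E /\ (a i <= b i)%E) ->
  (\prod_(i | A i) a i <= \prod_(i | A i) b i)%E.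
Proof.
move=> hab.
suff : (0 <= \prod_(i | A i) a i)%E /\ (\prod_(i | A i) a i <= \prod_(i | A i) b i)%E by case.
elim/big_rec2: _ => [|i y1 y2 Ai [y10 y12]]; first by split.
have [a0 ab] := hab i Ai; split; first exact: mule_ge0.
by apply: lee_pmul.
Qed.

Theorem theorem3p2 (R : realType) (dm : measure_display) (T : measurableType dm)
  (P : probability T R) (d : nat) (n r : 'I_d -> nat) (rho : R)
  (S : ('I_d -> nat) -> R) (z : forall k : 'I_d, 'I_(n k) -> 'I_(r k))
  (Y : Idx n -> T -> R) (d' : nat) (hd1 : (1 <= d')%N) (hd : (d' < d)%N) :
  TBM P rho S z Y ->
  (forall i, subPoisson P (Y i) rho) ->
  let H := ltnW hd in
  let rho' := (tail_size d' n)%:R * rho in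
  TBM P rho' (@core_agg R d' d n r z S) (@z_prefix d' d H n r z) (@aggregate R T d' d H n Y) /\
  (forall i', subPoisson P (@aggregate R T d' d H n Y i') rho').
Proof.
move=> [[rho0 Sb] mY iY indY EY] subP H rho'.
pose N := tail_size d' n.
pose gset := fun i' : Idx (nprefix H n) => [set i | Defs.prefix H i == i'].
have aggE : forall i', @aggregate R T d' d H n Y i' = Sg Y (gset i').
  by move=> i'; apply/funext => w; rewrite /aggregate /Sg; apply: eq_bigl => i; rewrite inE.
have cardG : forall i', #|gset i'| = N.
  move=> i'; rewrite -sum1_card (eq_bigl (fun i => Defs.prefix H i == i')); last first.
    by move=> i; rewrite inE.
  by rewrite sum_prefix sum1_card card_tail.
have mAgg : forall i', measurable_fun setT (@aggregate R T d' d H n Y i').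
  by move=> i'; rewrite aggE; exact: Sg_meas.
have intY : forall i, P.-integrable setT (EFin \o Y i) by move=> i; case: (EY i).
have intAgg : forall i', P.-integrable setT (EFin \o @aggregate R T d' d H n Y i').
  move=> i'; rewrite aggE /Sg.
  apply: (eq_integrable measurableT (fun x => \sum_(i in gset i') (Y i x)%:E)%E).
    by move=> x _ /=; rewrite sumEFin.
  by apply: (integrable_sum measurableT) => i _; exact: intY.
have EAgg : forall i', ('E_P[@aggregate R T d' d H n Y i'] = \sum_(i in gset i') 'E_P[Y i])%E.
  move=> i'; rewrite aggE unlock /Sg.
  under eq_integral do rewrite -sumEFin.
  rewrite (integral_sum measurableT intY).
  by [].
have EYi : forall i, ('E_P[Y i] = (rho * S (labels z i))%:E)%E by move=> i; case: (EY i).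
split.
  split.
  - split; first by apply: mulr_ge0 => //; exact: ler0n.
    move=> j' hj'; rewrite /core_agg; apply: avg_bound; first exact: card_tail.
    move=> t; apply: Sb; exact: comb_valid.
  - exact: mAgg.
  - by move=> i' w; rewrite /aggregate; apply: rpred_sum => i _; exact: iY.
  - have -> : @aggregate R T d' d H n Y = fun i' x => Sg Y (gset i') x.
      by apply/funext => i'; rewrite aggE.
    apply: block_indep => // k k' kk'; rewrite -setI_eq0; apply/eqP/setP => i.
    rewrite !inE; apply/negP => /andP[/eqP e1 /eqP e2]; move: kk'.
    by rewrite -e1 -e2 eqxx.
  - move=> i'; split; first exact: intAgg.
    rewrite EAgg (eq_bigr _ (fun i _ => EYi i)) sumEFin; congr EFin.
    rewrite (eq_bigl (fun i => Defs.prefix H i == i')); last by move=> i; rewrite inE.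
    rewrite sum_prefix.
    under eq_bigr do rewrite labels_join.
    rewrite /rho' /core_agg -mulr_sumr.
    have [N0|N0] := eqVneq (tail_size d' n) 0%N.
      rewrite N0 mul0r mul0r big1 ?mulr0 // => t _.
      by have := card0_eq (etrans (card_tail d' n) N0) t; rewrite !inE.
    by rewrite [_%:R * rho]mulrC -mulrA mulVKf // pnatr_eq0.
move=> i'.
have EfinY : forall i, ('E_P[Y i] = (fine 'E_P[Y i])%:E)%E by move=> i; rewrite EYi.
have mE : fine 'E_P[@aggregate R T d' d H n Y i'] = \sum_(i in gset i') fine 'E_P[Y i].
  by rewrite EAgg (eq_bigr _ (fun i _ => EfinY i)) sumEFin.
rewrite /subPoisson mE; split.
- exact: mAgg.
- exact: intAgg.
- move=> lam.
  have pw : forall w, expR (lam * (@aggregate R T d' d H n Y i' w - \sum_(i in gset i') fine 'E_P[Y i]))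
     = \prod_(i in gset i') expR (lam * (Y i w - fine 'E_P[Y i])).
    by move=> w; rewrite aggE /Sg -sumrB mulr_sumr expR_sum.
  pose f := fun i t => expR (lam * (t - fine 'E_P[Y i])).
  have mf : forall i, measurable_fun setT (f i).
    move=> i; apply: measurableT_comp; first exact: measurable_realfun.measurable_expR.
    apply: measurable_realfun.measurable_funM; first exact: measurable_cst.
    by apply: measurable_realfun.measurable_funD; [exact: measurable_id | exact: measurable_cst].
  have f0 : forall i t, 0 <= f i t by move=> i t; exact: expR_ge0.
  have -> : (fun w => expR (lam * (@aggregate R T d' d H n Y i' w - \sum_(i in gset i') fine 'E_P[Y i])))
     = (fun w => \prod_(i in gset i') f i (Y i w)) by apply/funext => w; rewrite pw.
  rewrite [in X in (X <= _)%E]unlock.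
  rewrite (prod_indep mY iY indY (gset i') mf f0).
  apply: (@le_trans _ _ (\prod_(i in gset i') (expR (rho * (expR `|lam| - 1 - `|lam|)))%:E)%E).
    apply: lee_prod_ge0 => i _; split; first by apply: integral_ge0 => x _; rewrite lee_fin.
    have := subP i; rewrite /subPoisson /= => -[_ _ + _] => /(_ lam); by rewrite /f unlock.
  rewrite prodEFin prodr_const cardG -expRM_natl /rho' mulrA.
  by [].
- pose g := fun i w => `|Y i w - fine 'E_P[Y i]|.
  have ig : forall i, P.-integrable setT (fun x => (g i x)%:E).
    move=> i; apply: (eq_integrable measurableT
      (abse \o ((EFin \o Y i) \- (EFin \o cst (fine 'E_P[Y i]))))%E).
      by move=> x xT.
    apply: integrable_abse; apply: (integrableB measurableT (intY i)).
    exact: finite_measure_integrable_cst.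
  apply: (@le_trans _ _ (\int[P]_x (\sum_(i in gset i') g i x)%:E)%E).
    rewrite unlock; apply: ge0_le_integral.
    - exact: measurableT.
    - by move=> x _; rewrite lee_fin.
    - apply/measurable_realfun.measurable_EFinP.
      apply: measurableT_comp => //.
      apply: measurable_realfun.measurable_funD; [exact: mAgg | exact: measurable_cst].
    - apply/measurable_realfun.measurable_EFinP.
      under eq_fun do rewrite big_mkcond /=.
      apply: measurable_sum => i; case: (i \in gset i'); last exact: measurable_cst.
      rewrite /g; apply: measurableT_comp => //.
      apply: measurable_realfun.measurable_funD; [exact: mY | exact: measurable_cst].
    - move=> x _; rewrite lee_fin aggE /Sg -sumrB.
      rewrite /g expectation.unlock; exact: ler_norm_sum.
  under eq_integral do rewrite -sumEFin.
  rewrite (integral_sum measurableT ig).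
  apply: (@le_trans _ _ (\sum_(i in gset i') rho%:E)%E).
    apply: lee_sum => i _.
    by have := subP i; rewrite /subPoisson /= => -[_ _ _]; rewrite /g unlock.
  by rewrite sumEFin sumr_const cardG /rho' mulr_natl.
Qed.
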